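(* Let $X,Y$ be Banach spaces and let $Z$ be a $1$-complemented subspace of $Y$ (so $X\widehat{\otimes}_\pi Z$ is naturally a subspace of $X\widehat{\otimes}_\pi Y$). Then $(X\widehat{\otimes}_\pi Z)\cap\mathrm{INA}_\pi(X\widehat{\otimes}_\pi Y)=\mathrm{INA}_\pi(X\widehat{\otimes}_\pi Z)$.
   Context: A subspace $Z\subseteq Y$ is $1$-complemented if there is a bounded linear projection $P:Y\to Z$ with $\|P\|=1$. Definition: $u\in X\widehat{\otimes}_\pi Y$ is an integral projective norm-attaining tensor, written $u\in\mathrm{INA}_\pi(X\widehat{\otimes}_\pi Y)$, if there is a finite positive Borel measure $\mu$ on $B_X\times B_Y$ (norm topology) such that $\varphi:B_X\times B_Y\to X\widehat{\otimes}_\pi Y$, $\varphi(x,y)=x\otimes y$, is $\mu$-Bochner integrable, $u=\int_{B_X\times B_Y}x\otimes y\,d\mu(x,y)$ (Bochner integral) and $\|\mu\|=\|u\|_\pi$; then $u$ is said to be witnessed by $\mu$. *)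

(* Defs.v *)
From HB Require Import structures.
From mathcomp Require Import all_boot all_order all_algebra.
From mathcomp Require Import all_classical all_reals all_analysis.
Set Implicit Arguments. Unset Strict Implicit. Unset Printing Implicit Defensive.
Import Order.TTheory GRing.Theory Num.Theory.
Import numFieldNormedType.Exports.
Local Open Scope classical_set_scope.
Local Open Scope ring_scope.

(* Projective tensor products X \hat\otimes_pi S (S a linear subspace of Y,
   S = setT giving X \hat\otimes_pi Y) are handled through representations
   u = sum_n x_n (x) y_n with y_n in S and sum_n ||x_n|| ||y_n|| < oo,
   an element being identified with its action on the dual
   (X \hat\otimes_pi S)^* = bounded bilinear forms on X x S. *)
Section ProjTensor.
Context {R : realType} {X Y : normedModType R}.

Definition bilin (B : X -> Y -> R) :=
  (forall y a x1 x2, B (a *: x1 + x2) y = a * B x1 y + B x2 y) /\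
  (forall x a y1 y2, B x (a *: y1 + y2) = a * B x y1 + B x y2).

Definition bform (S : set Y) (B : X -> Y -> R) :=
  bilin B /\ exists C : R, forall x y, S y -> `|B x y| <= C * `|x| * `|y|.

(* a formal representation sum_n (r n).1 (x) (r n).2 *)
Definition trep := nat -> (X * Y)%type.

Definition rep_in (S : set Y) (r : trep) :=
  (forall n, S (r n).2) /\ cvgn (series (fun n => `|(r n).1| * `|(r n).2|)).

Definition rep_cost (r : trep) : R :=
  limn (series (fun n => `|(r n).1| * `|(r n).2|)).

Definition rep_ev (B : X -> Y -> R) (r : trep) : R :=
  limn (series (fun n => B (r n).1 (r n).2)).

Definition tens_of (r : trep) : (X -> Y -> R) -> R := fun B => rep_ev B r.

Definition represents (S : set Y) (r : trep) (F : (X -> Y -> R) -> R) :=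
  rep_in S r /\ forall B, bform S B -> rep_ev B r = F B.

Definition tnorm (S : set Y) (F : (X -> Y -> R) -> R) : R :=
  inf (rep_cost @` [set r | represents S r F]).

Definition is_tensor (S : set Y) F := exists r, represents S r F.

Notation BT := (g_sigma_algebraType (@open (X * Y)%type)).

Definition ballD (S : set Y) : set BT :=
  [set p | `|p.1| <= 1 /\ `|p.2| <= 1 /\ S p.2].

(* simple functions B_X x B_S -> X \hat\otimes_pi S:
   t |-> sum_i 1_{A_i}(t) c_i, A_i Borel, c_i in X \hat\otimes_pi S *)
Definition simple_ok (S : set Y) (s : seq (set BT * trep)) :=
  forall c, c \in s -> measurable c.1 /\ rep_in S c.2.

Definition sf_val (s : seq (set BT * trep)) (t : BT) : (X -> Y -> R) -> R :=
  fun B => \sum_(c <- s) (\1_(c.1) t * rep_ev B c.2).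

Definition sf_int (mu : {finite_measure set BT -> \bar R})
  (s : seq (set BT * trep)) : (X -> Y -> R) -> R :=
  fun B => \sum_(c <- s) (fine (mu c.1) * rep_ev B c.2).

Definition elem (t : BT) : (X -> Y -> R) -> R := fun B => B t.1 t.2.

(* phi is Bochner integrable on B_X x B_S w.r.t. mu with Bochner integral
   (the tensor) F : there are simple s_k with
   int ||s_k - phi||_pi dmu -> 0, and F = lim int s_k in ||.||_pi. *)
Definition bochner_int (S : set Y) (mu : {finite_measure set BT -> \bar R})
    (F : (X -> Y -> R) -> R) :=
  exists s : nat -> seq (set BT * trep),
    (forall k, simple_ok S (s k)) /\
    (forall k, measurable_fun (ballD S)
        (fun t : BT => tnorm S (fun B => sf_val (s k) t B - elem t B))) /\
    ((fun k => (\int[mu]_(t in ballD S)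
        (tnorm S (fun B => sf_val (s k) t B - elem t B))%:E)%E) @ \oo --> 0%E) /\
    ((fun k => tnorm S (fun B => sf_int mu (s k) B - F B)) @ \oo --> (0 : R)).

Definition INA (S : set Y) (F : (X -> Y -> R) -> R) :=
  is_tensor S F /\
  exists mu : {finite_measure set BT -> \bar R},
    mu (~` ballD S) = 0%E /\
    mu setT = (tnorm S F)%:E /\
    bochner_int S mu F.

End ProjTensor.

(* Main.v *)
Require Import Defs.

From HB Require Import structures.
From mathcomp Require Import all_boot all_order all_algebra.
From mathcomp Require Import all_classical all_reals all_analysis.
From mathcomp Require Import ring lra.
From mathcomp Require Import measurable_realfun.
Import Order.TTheory GRing.Theory Num.Theory.
Import numFieldNormedType.Exports.
Local Open Scope classical_set_scope.
Local Open Scope ring_scope.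
Set Implicit Arguments. Unset Strict Implicit. Unset Printing Implicit Defensive.
Section Reps.
Context {R : realType}.

Lemma series_il (u v : R ^nat) m :
  series (fun n => if odd n then v n./2 else u n./2) m =
  series u (uphalf m) + series v m./2.
Proof.
elim: m => [|m IH]; first by rewrite /series /= !big_geq // addr0.
rewrite seriesSr IH /=.
case: (boolP (odd m)) => om.
  by rewrite uphalf_half om /= add1n (seriesSr v); ring.
by rewrite uphalf_half (negbTE om) /= add0n (seriesSr u); ring.
Qed.

Lemma half_cvg : (fun n => n./2) @ \oo --> \oo.
Proof.
apply/cvgnyPge => A; exists A.*2 => // x /= hx.
by rewrite -(doubleK A); apply: half_leq.
Qed.

Lemma uphalf_cvg : (fun n => uphalf n) @ \oo --> \oo.
Proof.
apply/cvgnyPge => A; exists A.*2 => // x /= hx.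
rewrite uphalf_half; apply: leq_trans (leq_addl _ _).
by rewrite -(doubleK A); apply: half_leq.
Qed.

Lemma cvg_il (u v : R ^nat) a b :
  series u @ \oo --> a -> series v @ \oo --> b ->
  series (fun n => if odd n then v n./2 else u n./2) @ \oo --> a + b.
Proof.
move=> ha hb.
have -> : series (fun n => if odd n then v n./2 else u n./2) =
  (fun m => series u (uphalf m) + series v m./2).
  by apply/funext => m; rewrite series_il.
apply: cvgD.
  exact: (cvg_comp _ _ uphalf_cvg ha).
exact: (cvg_comp _ _ half_cvg hb).
Qed.

End Reps.

Section Tens.
Context {R : realType} {X Y : normedModType R}.
Local Notation Fn := ((X -> Y -> R) -> R).
Local Notation trep := (@trep R X Y).
Implicit Types (S : set Y) (r : trep) (F G : Fn) (B : X -> Y -> R).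

Definition cost r n := `|(r n).1| * `|(r n).2|.
Definition ril (r1 r2 : trep) : trep :=
  fun n => if odd n then r2 n./2 else r1 n./2.
Definition rsc (a : R) r : trep := fun n => (a *: (r n).1, (r n).2).
Definition rel1 (x : X) (y : Y) : trep :=
  fun n => if n == 0%N then (x, y) else (0, y).
Definition rmap (f : Y -> Y) r : trep := fun n => ((r n).1, f (r n).2).
Definition bterm B r n := B (r n).1 (r n).2.

Lemma cost_ge0 r n : 0 <= cost r n.
Proof. by rewrite /cost mulr_ge0. Qed.

Lemma rep_cost_ge0 S r : rep_in S r -> 0 <= rep_cost r.
Proof.
move=> [_ hc]; apply: limr_ge => //; near=> n.
by rewrite /series /= sumr_ge0 // => i _; exact: cost_ge0.
Unshelve. all: by end_near. Qed.

Section bilin.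
Variable B : X -> Y -> R.
Hypothesis hB : bilin B.

Lemma bilinZl a x y : B (a *: x) y = a * B x y.
Proof.
have h0 : B 0 y = 0.
  have := hB.1 y 1 0 0; rewrite scale1r addr0 mul1r => h.
  by move: h; lra.
by have := hB.1 y a x 0; rewrite addr0 h0 addr0.
Qed.
Lemma bilinDl x1 x2 y : B (x1 + x2) y = B x1 y + B x2 y.
Proof. by have := hB.1 y 1 x1 x2; rewrite scale1r mul1r. Qed.
Lemma bilin0l y : B 0 y = 0.
Proof. by have := bilinZl 0 0 y; rewrite scale0r mul0r. Qed.
Lemma bilinZr a x y : B x (a *: y) = a * B x y.
Proof.
have h0 : B x 0 = 0.
  have := hB.2 x 1 0 0; rewrite scale1r addr0 mul1r => h.
  by move: h; lra.
by have := hB.2 x a y 0; rewrite addr0 h0 addr0.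
Qed.
Lemma bilinDr x y1 y2 : B x (y1 + y2) = B x y1 + B x y2.
Proof. by have := hB.2 x 1 y1 y2; rewrite scale1r mul1r. Qed.
Lemma bilinBl x1 x2 y : B (x1 - x2) y = B x1 y - B x2 y.
Proof. by rewrite bilinDl -scaleN1r bilinZl mulN1r. Qed.
Lemma bilinBr x y1 y2 : B x (y1 - y2) = B x y1 - B x y2.
Proof. by rewrite bilinDr -scaleN1r bilinZr mulN1r. Qed.
End bilin.

Lemma bform_sub S1 S2 B : S1 `<=` S2 -> bform S2 B -> bform S1 B.
Proof. by move=> h [hb [C hC]]; split=> //; exists C => x y /h; exact: hC. Qed.

Lemma rep_in_sub S1 S2 r : S1 `<=` S2 -> rep_in S1 r -> rep_in S2 r.
Proof. by move=> h [h1 h2]; split=> // n; exact/h. Qed.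

Lemma bterm_cvg S B r : bform S B -> rep_in S r ->
  series (bterm B r) @ \oo --> rep_ev B r.
Proof.
move=> [hb [C hC]] [hS hc].
suff : cvgn (series (bterm B r)) by [].
apply: normed_cvg.
apply: (@series_le_cvg _ _ (fun n => `|C| * cost r n)).
- by move=> n; rewrite /= normr_ge0.
- by move=> n; rewrite mulr_ge0 // cost_ge0.
- move=> n /=; rewrite /bterm /cost (le_trans (hC _ _ (hS n))) //.
  by rewrite -mulrA ler_wpM2r ?mulr_ge0 // ler_norm.
- have -> : (fun n => `|C| * cost r n) = `|C| *: (cost r) by [].
  exact: is_cvg_seriesZ.
Qed.

Lemma rep_evE S B r v : bform S B -> rep_in S r ->
  series (bterm B r) @ \oo --> v -> rep_ev B r = v.
Proof. by move=> hB hr hv; apply: cvg_lim. Qed.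

Lemma ril_term (f : X -> Y -> R) r1 r2 n :
  f (ril r1 r2 n).1 (ril r1 r2 n).2 =
  if odd n then f (r2 n./2).1 (r2 n./2).2 else f (r1 n./2).1 (r1 n./2).2.
Proof. by rewrite /ril; case: odd. Qed.

Lemma rep_in_il S r1 r2 : rep_in S r1 -> rep_in S r2 -> rep_in S (ril r1 r2).
Proof.
move=> [h1 c1] [h2 c2]; split.
  by move=> n; rewrite /ril; case: odd.
have -> : (fun n => `|(ril r1 r2 n).1| * `|(ril r1 r2 n).2|) =
  (fun n => if odd n then cost r2 n./2 else cost r1 n./2).
  by apply/funext => n; rewrite (ril_term (fun x y => `|x| * `|y|)).
exact: cvgP (cvg_il c1 c2).
Qed.

Lemma rep_cost_il S r1 r2 : rep_in S r1 -> rep_in S r2 ->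
  rep_cost (ril r1 r2) = rep_cost r1 + rep_cost r2.
Proof.
move=> [h1 c1] [h2 c2]; apply: cvg_lim => //.
have -> : (fun n => `|(ril r1 r2 n).1| * `|(ril r1 r2 n).2|) =
  (fun n => if odd n then cost r2 n./2 else cost r1 n./2).
  by apply/funext => n; rewrite (ril_term (fun x y => `|x| * `|y|)).
exact: (cvg_il c1 c2).
Qed.

Lemma rep_ev_il S B r1 r2 : bform S B -> rep_in S r1 -> rep_in S r2 ->
  rep_ev B (ril r1 r2) = rep_ev B r1 + rep_ev B r2.
Proof.
move=> hB h1 h2; apply: (rep_evE hB (rep_in_il h1 h2)).
have -> : bterm B (ril r1 r2) =
  (fun n => if odd n then bterm B r2 n./2 else bterm B r1 n./2).
  by apply/funext => n; rewrite /bterm ril_term.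
exact: (cvg_il (bterm_cvg hB h1) (bterm_cvg hB h2)).
Qed.

Lemma rep_in_sc S a r : rep_in S r -> rep_in S (rsc a r).
Proof.
move=> [h1 c1]; split => // .
have -> : (fun n => `|(rsc a r n).1| * `|(rsc a r n).2|) = `|a| *: cost r.
  by apply/funext => n; rewrite /rsc /cost /= normrZ -mulrA.
exact: is_cvg_seriesZ.
Qed.

Lemma rep_cost_sc S a r : rep_in S r -> rep_cost (rsc a r) = `|a| * rep_cost r.
Proof.
move=> [h1 c1]; rewrite /rep_cost.
have -> : (fun n => `|(rsc a r n).1| * `|(rsc a r n).2|) = `|a| *: cost r.
  by apply/funext => n; rewrite /rsc /cost /= normrZ -mulrA.
by rewrite lim_seriesZ.
Qed.

Lemma rep_ev_sc S B a r : bform S B -> rep_in S r ->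
  rep_ev B (rsc a r) = a * rep_ev B r.
Proof.
move=> hB hr; rewrite /rep_ev.
have -> : (fun n => B (rsc a r n).1 (rsc a r n).2) = a *: bterm B r.
  by apply/funext => n; rewrite /rsc /bterm /= bilinZl //; case: hB.
by rewrite lim_seriesZ //; exact: cvgP (bterm_cvg hB hr).
Qed.

Lemma series_rel1 (f : nat -> R) m : (forall n, (0 < n)%N -> f n = 0) ->
  series f m.+1 = f 0%N.
Proof.
move=> h; elim: m => [|m IH]; first by rewrite /series /= big_nat1.
by rewrite seriesSr IH (h m.+1) // addr0.
Qed.

Lemma cvg_rel1 (f : nat -> R) : (forall n, (0 < n)%N -> f n = 0) ->
  series f @ \oo --> f 0%N.
Proof.
move=> h; apply: cvg_near_cst; exists 1%N => // m /= hm.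
by case: m hm => // m _; exact: series_rel1.
Qed.

Lemma rep_in_el S x y : S y -> rep_in S (rel1 x y).
Proof.
move=> hy; split; first by move=> n; rewrite /rel1; case: (n == 0)%N.
apply: cvgP (cvg_rel1 _) => -[|n] // _.
by rewrite /rel1 /= normr0 mul0r.
Qed.

Lemma rep_cost_el x y : rep_cost (rel1 x y) = `|x| * `|y|.
Proof.
apply: cvg_lim => //; apply: cvg_rel1 => -[|n] // _.
by rewrite /rel1 /= normr0 mul0r.
Qed.

Lemma rep_ev_el B x y : bilin B -> rep_ev B (rel1 x y) = B x y.
Proof.
move=> hB; apply: cvg_lim => //; apply: cvg_rel1 => -[|n] // _.
by rewrite /rel1 /= bilin0l.
Qed.

Lemma rep_in_map S1 S2 (P : Y -> Y) r :
  (forall y, S2 (P y)) -> (forall y, `|P y| <= `|y|) ->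
  rep_in S1 r -> rep_in S2 (rmap P r).
Proof.
move=> hP hn [h1 c1]; split; first by move=> n; exact: hP.
apply: (@series_le_cvg _ _ (cost r)).
- by move=> n; rewrite mulr_ge0.
- by move=> n; exact: cost_ge0.
- by move=> n; rewrite /rmap /cost /= ler_wpM2l.
- exact: c1.
Qed.

Lemma rep_cost_map S1 S2 (P : Y -> Y) r :
  (forall y, S2 (P y)) -> (forall y, `|P y| <= `|y|) ->
  rep_in S1 r -> rep_cost (rmap P r) <= rep_cost r.
Proof.
move=> hP hn hr; have [_ c2] := rep_in_map hP hn hr.
have [_ c1] := hr.
apply: lim_series_le => // n.
by rewrite /rmap /= ler_wpM2l.
Qed.

End Tens.

Section Tnorm.
Context {R : realType} {X Y : normedModType R}.
Local Notation Fn := ((X -> Y -> R) -> R).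
Local Notation trep := (@trep R X Y).
Implicit Types (S : set Y) (r : trep) (F G : Fn) (B : X -> Y -> R).

Definition fadd F G : Fn := fun B => F B + G B.
Definition fsc (a : R) F : Fn := fun B => a * F B.
Definition fel (x : X) (y : Y) : Fn := fun B => B x y.
Definition fpm (P : Y -> Y) F : Fn := fun B => F (fun x y => B x (P y)).
Definition fsub F G := fadd F (fsc (-1) G).
Definition eqS S F G := forall B, bform S B -> F B = G B.

Lemma represents_eqS S r F G : eqS S F G -> represents S r F -> represents S r G.
Proof. by move=> h [h1 h2]; split=> // B hB; rewrite h2 // h. Qed.

Lemma is_tensor_eqS S F G : eqS S F G -> is_tensor S F -> is_tensor S G.
Proof. by move=> h [r hr]; exists r; exact: represents_eqS hr. Qed.

Lemma tnorm_eqS S F G : eqS S F G -> tnorm S F = tnorm S G.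
Proof.
move=> h; rewrite /tnorm.
have -> : [set r | represents S r F] = [set r | represents S r G] => //.
apply/seteqP; split => r /= hr; apply: represents_eqS hr => // B hB.
by rewrite h.
Qed.

Lemma tnorm_ge0 S F : 0 <= tnorm S F.
Proof.
rewrite /tnorm; have [[r hr]|h0] := pselect (exists r, represents S r F).
  apply: lb_le_inf; first by exists (rep_cost r), r.
  by move=> _ [r' [hr' _] <-]; exact: rep_cost_ge0 hr'.
suff -> : rep_cost @` [set r | represents S r F] = set0 by rewrite inf0.
by apply/seteqP; split => // c [r hr _]; apply: h0; exists r.
Qed.

Lemma tnorm_lb S F : has_lbound (rep_cost @` [set r | represents S r F]).
Proof. by exists 0 => _ [r' [hr' _] <-]; exact: rep_cost_ge0 hr'. Qed.

Lemma tnorm_le S r F : represents S r F -> tnorm S F <= rep_cost r.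
Proof. by move=> hr; apply: (ge_inf (tnorm_lb S F)); exists r. Qed.

Lemma tnorm_approx S F e : is_tensor S F -> 0 < e ->
  exists r, represents S r F /\ rep_cost r < tnorm S F + e.
Proof.
move=> [r hr] e0.
have hi : has_inf (rep_cost @` [set r | represents S r F]).
  by split; [exists (rep_cost r), r | exact: tnorm_lb].
have [c [r' hr' <-] h] := inf_adherent e0 hi.
by exists r'.
Qed.

Lemma represents_add S r1 r2 F G : represents S r1 F -> represents S r2 G ->
  represents S (ril r1 r2) (fadd F G).
Proof.
move=> [i1 e1] [i2 e2]; split; first exact: rep_in_il.
by move=> B hB; rewrite (rep_ev_il hB i1 i2) e1 // e2.
Qed.

Lemma represents_sc S a r F : represents S r F -> represents S (rsc a r) (fsc a F).
Proof.
move=> [i1 e1]; split; first exact: rep_in_sc.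
by move=> B hB; rewrite (rep_ev_sc a hB i1) e1.
Qed.

Lemma represents_el S x y : S y -> represents S (rel1 x y) (fel x y).
Proof.
move=> hy; split; first exact: rep_in_el.
by move=> B hB; rewrite rep_ev_el //; case: hB.
Qed.

Lemma represents_map S1 S2 (P : Y -> Y) r F :
  (forall B, bform S2 B -> bform S1 (fun x y => B x (P y))) ->
  (forall y, S2 (P y)) -> (forall y, `|P y| <= `|y|) ->
  represents S1 r F -> represents S2 (rmap P r) (fpm P F).
Proof.
move=> hB hP hn [i1 e1]; split; first exact: rep_in_map i1.
by move=> B bB; rewrite /fpm -e1 //; exact: hB.
Qed.

Lemma is_tensor_add S F G : is_tensor S F -> is_tensor S G -> is_tensor S (fadd F G).
Proof. by move=> [r1 h1] [r2 h2]; exists (ril r1 r2); exact: represents_add. Qed.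

Lemma is_tensor_sc S a F : is_tensor S F -> is_tensor S (fsc a F).
Proof. by move=> [r1 h1]; exists (rsc a r1); exact: represents_sc. Qed.

Lemma is_tensor_el S x y : S y -> is_tensor S (fel x y).
Proof. by move=> hy; exists (rel1 x y); exact: represents_el. Qed.

Lemma is_tensor_sub S F G : is_tensor S F -> is_tensor S G -> is_tensor S (fsub F G).
Proof. by move=> h1 h2; apply: is_tensor_add h1 (is_tensor_sc _ h2). Qed.

Lemma is_tensor_rep S r : rep_in S r -> is_tensor S (fun B => rep_ev B r).
Proof. by move=> hr; exists r; split. Qed.

Lemma tnorm_add S F G : is_tensor S F -> is_tensor S G ->
  tnorm S (fadd F G) <= tnorm S F + tnorm S G.
Proof.
move=> hF hG; apply/ler_addgt0Pr => e e0.
have e20 : 0 < e / 2 by rewrite divr_gt0.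
have [r1 [h1 c1]] := tnorm_approx hF e20.
have [r2 [h2 c2]] := tnorm_approx hG e20.
apply: le_trans (tnorm_le (represents_add h1 h2)) _.
rewrite (rep_cost_il h1.1 h2.1); lra.
Qed.

Lemma tnorm_sc S a F : is_tensor S F -> tnorm S (fsc a F) <= `|a| * tnorm S F.
Proof.
move=> hF; apply/ler_addgt0Pr => e e0.
have a0 : 0 < `|a| + 1 by rewrite ltr_wpDl.
have e20 : 0 < e / (`|a| + 1) by rewrite divr_gt0.
have [r1 [h1 c1]] := tnorm_approx hF e20.
apply: le_trans (tnorm_le (represents_sc a h1)) _.
rewrite (rep_cost_sc a h1.1).
have h : `|a| * (e / (`|a| + 1)) <= e.
  rewrite mulrA ler_pdivrMr //; nra.
have ha : 0 <= `|a| by [].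
have : `|a| * rep_cost r1 <= `|a| * (tnorm S F + e / (`|a| + 1)).
  by rewrite ler_wpM2l // ltW.
rewrite mulrDr; lra.
Qed.

Lemma tnorm_el S x y : S y -> tnorm S (fel x y) <= `|x| * `|y|.
Proof. by move=> hy; rewrite -rep_cost_el; apply: tnorm_le; exact: represents_el. Qed.

Lemma tnorm_map S1 S2 (P : Y -> Y) F :
  (forall B, bform S2 B -> bform S1 (fun x y => B x (P y))) ->
  (forall y, S2 (P y)) -> (forall y, `|P y| <= `|y|) ->
  is_tensor S1 F -> tnorm S2 (fpm P F) <= tnorm S1 F.
Proof.
move=> hB hP hn hF; apply/ler_addgt0Pr => e e0.
have [r1 [h1 c1]] := tnorm_approx hF e0.
apply: le_trans (tnorm_le (represents_map hB hP hn h1)) _.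
have := rep_cost_map hP hn h1.1; lra.
Qed.

Lemma is_tensor_map S1 S2 (P : Y -> Y) F :
  (forall B, bform S2 B -> bform S1 (fun x y => B x (P y))) ->
  (forall y, S2 (P y)) -> (forall y, `|P y| <= `|y|) ->
  is_tensor S1 F -> is_tensor S2 (fpm P F).
Proof. by move=> hB hP hn [r hr]; exists (rmap P r); exact: (represents_map hB hP hn hr). Qed.

Lemma tnorm_sub S F G : is_tensor S F -> is_tensor S G ->
  tnorm S (fsub F G) <= tnorm S F + tnorm S G.
Proof.
move=> hF hG; apply: le_trans (tnorm_add hF (is_tensor_sc (-1) hG)) _.
by rewrite lerD2l; apply: le_trans (tnorm_sc _ hG) _; rewrite normrN1 mul1r.
Qed.

Lemma tnorm_lip S F G : is_tensor S F -> is_tensor S G ->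
  tnorm S F <= tnorm S G + tnorm S (fsub F G).
Proof.
move=> hF hG.
have -> : tnorm S F = tnorm S (fadd G (fsub F G)).
  by apply: tnorm_eqS => B _; rewrite /fadd /fsub /fadd /fsc; ring.
exact: tnorm_add hG (is_tensor_sub hF hG).
Qed.

Lemma tnorm_subC S F G : is_tensor S F -> is_tensor S G ->
  tnorm S (fsub G F) = tnorm S (fsub F G).
Proof.
move=> hF hG; apply/eqP; rewrite eq_le; apply/andP; split.
- rewrite (@tnorm_eqS S (fsub G F) (fsc (-1) (fsub F G))); last first.
    by move=> B _; rewrite /fadd /fsub /fadd /fsc; ring.
  by apply: le_trans (tnorm_sc _ (is_tensor_sub hF hG)) _; rewrite normrN1 mul1r.
- rewrite (@tnorm_eqS S (fsub F G) (fsc (-1) (fsub G F))); last first.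
    by move=> B _; rewrite /fadd /fsub /fadd /fsc; ring.
  by apply: le_trans (tnorm_sc _ (is_tensor_sub hG hF)) _; rewrite normrN1 mul1r.
Qed.

Lemma tnorm_dist S F G : is_tensor S F -> is_tensor S G ->
  `|tnorm S F - tnorm S G| <= tnorm S (fsub F G).
Proof.
move=> hF hG; have h1 := tnorm_lip hF hG; have h2 := tnorm_lip hG hF.
rewrite (tnorm_subC hF hG) in h2.
rewrite ler_norml; apply/andP; split; lra.
Qed.

End Tnorm.

Section Proj.
Context {R : realType} {X Y : normedModType R}.
Local Notation Fn := ((X -> Y -> R) -> R).
Local Notation trep := (@trep R X Y).
Implicit Types (S : set Y) (r : trep) (F G : Fn) (B : X -> Y -> R).
Variable P : {linear Y -> Y}.
Hypothesis Pn : forall y, `|P y| <= `|y|.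

Lemma bform_comp S1 S2 B : (forall y, S1 y -> S2 (P y)) -> bform S2 B ->
  bform S1 (fun x y => B x (P y)).
Proof.
move=> hS [[h1 h2] [C hC]]; split.
  split; first by move=> y a x1 x2; exact: h1.
  by move=> x a y1 y2; rewrite linearP h2.
exists `|C| => x y /hS hy.
apply: le_trans (hC _ _ hy) _.
rewrite -!mulrA.
apply: le_trans (ler_wpM2r (mulr_ge0 (normr_ge0 x) (normr_ge0 (P y))) (ler_norm C)) _.
by rewrite ler_wpM2l // ler_wpM2l.
Qed.

Lemma rmap_id S r : (forall z, S z -> P z = z) -> rep_in S r -> rmap P r = r.
Proof.
move=> hP hr; apply/funext => n; rewrite /rmap (hP _ (hr.1 n)).
by case: (r n).
Qed.

Lemma fmap_tens S r : (forall z, S z -> P z = z) -> rep_in S r ->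
  fpm P (tens_of r) = tens_of r.
Proof.
move=> hP hr; apply/funext => B.
by change (rep_ev B (rmap P r) = rep_ev B r); rewrite (rmap_id hP hr).
Qed.

Lemma tnorm_TZ Z : (forall z, Z z -> P z = z) -> (forall y, Z (P y)) ->
  forall F, is_tensor Z F -> tnorm setT F = tnorm Z F.
Proof.
move=> hPid hPr F hF.
have hFT : is_tensor setT F.
  case: hF => r [hr1 hr2]; exists r; split; first exact: rep_in_sub hr1.
  by move=> B hB; apply: hr2; exact: bform_sub hB.
apply/eqP; rewrite eq_le; apply/andP; split.
  case: hF => r hr; apply: lb_le_inf; first by exists (rep_cost r), r.
  move=> _ [r' [hr1 hr2] <-]; apply: tnorm_le; split.
    exact: rep_in_sub hr1.
  by move=> B hB; apply: hr2; exact: bform_sub hB.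
have -> : tnorm Z F = tnorm Z (fpm P F).
  apply: tnorm_eqS => B hB.
  case: hF => r [hr1 hr2].
  rewrite /fpm -(hr2 B hB) -(hr2 (fun x y => B x (P y))); last first.
    by apply: (bform_sub (S2 := setT)) => //; apply: bform_comp hB.
  by change (rep_ev B r = rep_ev B (rmap P r)); rewrite (rmap_id hPid hr1).
apply: tnorm_map => //.
by move=> B hB; apply: bform_comp hB.
Qed.

End Proj.

Section Cont.
Context {R : realType} {X Y : normedModType R}.
Local Notation Fn := ((X -> Y -> R) -> R).
Local Notation BT := (g_sigma_algebraType (@open (X * Y)%type)).

Lemma fst_near (t : X * Y) (e : R) : 0 < e -> \forall t' \near t, `|t.1 - t'.1| < e.
Proof.
move=> e0; have : (fun p : X * Y => p.1) @ t --> t.1 by exact: cvg_fst.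
by move/cvgrPdist_lt; apply.
Qed.

Lemma snd_near (t : X * Y) (e : R) : 0 < e -> \forall t' \near t, `|t.2 - t'.2| < e.
Proof.
move=> e0; have : (fun p : X * Y => p.2) @ t --> t.2 by exact: cvg_snd.
by move/cvgrPdist_lt; apply.
Qed.

Lemma tn_cont (w : Fn) (k : R) : is_tensor setT w ->
  continuous (fun t : X * Y => tnorm setT (fsub w (fsc k (fel t.1 t.2)))).
Proof.
move=> hw t; apply/cvgrPdist_lt => e e0.
set M := `|k| * (`|t.2| + 1 + `|t.1|).
have M0 : 0 <= M by rewrite mulr_ge0 // addr_ge0 // addr_ge0.
set d := Num.min 1 (e / (M + 1)).
have d0 : 0 < d by rewrite lt_min ltr01 divr_gt0 // ltr_wpDl.
have d1 : d <= 1 by rewrite ge_min lexx.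
have d2 : d <= e / (M + 1) by rewrite ge_min lexx orbT.
have hG : forall t' : X * Y, is_tensor setT (fsub w (fsc k (fel t'.1 t'.2))).
  by move=> t'; apply: is_tensor_sub hw (is_tensor_sc _ (is_tensor_el _ _)).
near=> t'.
have h1 : `|t.1 - t'.1| < d by near: t'; exact: fst_near.
have h2 : `|t.2 - t'.2| < d by near: t'; exact: snd_near.
apply: le_lt_trans (tnorm_dist (hG t) (hG t')) _.
rewrite (@tnorm_eqS _ _ _ setT _ (fsc k (fadd (fel (t'.1 - t.1) t'.2) (fel t.1 (t'.2 - t.2))))); last first.
  move=> B [hB _]; rewrite /fsub /fadd /fsc /fel.
  rewrite (bilinBl hB) (bilinBr hB); ring.
apply: le_lt_trans (tnorm_sc _ (is_tensor_add (is_tensor_el _ _) (is_tensor_el _ _))) _ => //.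
have h3 := tnorm_add (S := setT) (is_tensor_el (t'.1 - t.1) (I : setT t'.2)) (is_tensor_el t.1 (I : setT (t'.2 - t.2))).
have h4 := tnorm_el (S := setT) (t'.1 - t.1) (I : setT t'.2).
have h5 := tnorm_el (S := setT) t.1 (I : setT (t'.2 - t.2)).
have h6 : `|t'.2| <= `|t.2| + 1.
  have : `|t'.2| <= `|t.2| + `|t'.2 - t.2|.
    by have := ler_normD t.2 (t'.2 - t.2); rewrite [t.2 + _]addrC subrK.
  rewrite distrC; lra.
rewrite distrC in h1; rewrite distrC in h2.
have h7 : `|t'.1 - t.1| * `|t'.2| <= d * (`|t.2| + 1).
  by apply: ler_pM => //; exact: ltW.
have h8 : `|t.1| * `|t'.2 - t.2| <= `|t.1| * d.
  by apply: ler_wpM2l => //; exact: ltW.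
have h9 : tnorm setT (fadd (fel (t'.1 - t.1) t'.2) (fel t.1 (t'.2 - t.2))) <= d * (`|t.2| + 1 + `|t.1|).
  lra.
have h10 : `|k| * tnorm setT (fadd (fel (t'.1 - t.1) t'.2) (fel t.1 (t'.2 - t.2))) <= d * M.
  rewrite /M mulrCA; exact: ler_wpM2l.
apply: le_lt_trans h10 _.
have : d * M <= e / (M + 1) * M by exact: ler_wpM2r.
have : e / (M + 1) * M < e.
  by rewrite mulrAC ltr_pdivrMr ?ltr_wpDl //; nra.
lra.
Unshelve. all: by end_near. Qed.

Lemma cont_meas (f : X * Y -> R) : continuous f -> measurable_fun (setT : set BT) (fun t : BT => f t).
Proof.
move=> cf; apply: (@measurability _ _ BT R setT f _ (measurable_realfun.RGenOpens.measurableE R)) => _ [_ [a [b ->]] <-].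
apply: sub_sigma_algebra; rewrite setTI.
move/continuousP: cf => cf; apply: cf.
exact: interval_open.
Qed.

End Cont.

Section Meas.
Context {R : realType} {X Y : normedModType R}.
Local Notation Fn := ((X -> Y -> R) -> R).
Local Notation trep := (@trep R X Y).
Local Notation BT := (g_sigma_algebraType (@open (X * Y)%type)).
Implicit Types (S : set Y) (r : trep) (F G : Fn) (B : X -> Y -> R).

Lemma closed_meas (A : set (X * Y)) : closed A -> measurable (A : set BT).
Proof.
move=> cA; rewrite -(setCK A); apply: measurableC.
by apply: sub_sigma_algebra; exact: closed_openC.
Qed.

Lemma ballD_closed S : closed S -> closed (ballD S : set (X * Y)).
Proof.
move=> cS.
have -> : (ballD S : set (X * Y)) = ((fun p : X * Y => `|p.1|) @^-1` [set x | x <= 1])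
   `&` (((fun p : X * Y => `|p.2|) @^-1` [set x | x <= 1]) `&` ((fun p : X * Y => p.2) @^-1` S)).
  by apply/seteqP; split => p.
have c1 : continuous (fun p : X * Y => p.1) by move=> p; exact: cvg_fst.
have c2 : continuous (fun p : X * Y => p.2) by move=> p; exact: cvg_snd.
apply: closedI; last apply: closedI.
- apply: (continuous_closedP _).1; last exact: closed_le.
  by move=> p; apply: continuous_comp; [exact: c1 | exact: norm_continuous].
- apply: (continuous_closedP _).1; last exact: closed_le.
  by move=> p; apply: continuous_comp; [exact: c2 | exact: norm_continuous].
- by apply: (continuous_closedP _).1.
Qed.

Lemma ballD_meas S : closed S -> measurable (ballD S : set BT).
Proof. by move=> cS; apply: closed_meas; exact: ballD_closed. Qed.

Lemma meas_if (A : set BT) (f1 f2 : BT -> R) : measurable A ->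
  measurable_fun setT f1 -> measurable_fun setT f2 ->
  measurable_fun setT (fun t => if t \in A then f1 t else f2 t).
Proof.
move=> mA m1 m2 _ V mV; rewrite setTI.
have -> : (fun t => if t \in A then f1 t else f2 t) @^-1` V =
  (A `&` (f1 @^-1` V)) `|` (~` A `&` (f2 @^-1` V)).
  apply/seteqP; split => t /=.
    case: (boolP (t \in A)) => ht hV.
      by left; split => //; rewrite -in_setE.
    by right; split=> // At; move: ht; rewrite (mem_set At).
  by move=> [[ht hV]|[ht hV]]; [rewrite mem_set | rewrite memNset].
apply: measurableU; apply: measurableI => //; first by rewrite -(setTI (_ @^-1` _)); exact: m1.
  exact: measurableC.
by rewrite -(setTI (_ @^-1` _)); exact: m2.
Qed.

Lemma is_tensor_lin S (s : seq (set BT * trep)) (w : Fn) (f : set BT * trep -> R) (a : R) :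
  simple_ok S s -> is_tensor S w ->
  is_tensor S (fun B => a * w B + \sum_(c <- s) f c * rep_ev B c.2).
Proof.
elim: s => [|c s IH] hs hw.
  by apply: is_tensor_eqS (is_tensor_sc a hw) => B _; rewrite big_nil addr0.
have hs' : simple_ok S s by move=> c' hc'; apply: hs; rewrite inE hc' orbT.
have [_ hc] : measurable c.1 /\ rep_in S c.2 by apply: hs; rewrite inE eqxx.
apply: is_tensor_eqS (is_tensor_add (IH hs' hw) (is_tensor_sc (f c) (is_tensor_rep hc))).
by move=> B _; rewrite /fadd /fsc big_cons; ring.
Qed.

Lemma is_tensor_sfv S (s : seq (set BT * trep)) (w : Fn) t :
  simple_ok S s -> is_tensor S w -> is_tensor S (fun B => w B + sf_val s t B).
Proof.
move=> hs hw; apply: is_tensor_eqS (is_tensor_lin (fun c => \1_(c.1) t) 1 hs hw).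
by move=> B _; rewrite mul1r.
Qed.

Definition sfn (s : seq (set BT * trep)) (w : Fn) (k : R) (t : BT) : R :=
  tnorm setT (fsub (fun B => w B + sf_val s t B) (fsc k (fel t.1 t.2))).

Lemma sfn_meas (s : seq (set BT * trep)) (w : Fn) (k : R) :
  simple_ok setT s -> is_tensor setT w -> measurable_fun setT (sfn s w k).
Proof.
elim: s w => [|c s IH] w hs hw.
  have -> : sfn [::] w k = (fun t : BT => tnorm setT (fsub w (fsc k (fel t.1 t.2)))).
    apply/funext => t; rewrite /sfn; congr tnorm; apply/funext => B.
    by rewrite /fsub /fadd /sf_val big_nil addr0.
  exact: (cont_meas (tn_cont (k:=k) hw)).
have hs' : simple_ok setT s by move=> c' hc'; apply: hs; rewrite inE hc' orbT.
have [mc hc] : measurable c.1 /\ rep_in setT c.2 by apply: hs; rewrite inE eqxx.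
have hw1 : is_tensor setT (fun B => w B + rep_ev B c.2).
  exact: is_tensor_add hw (is_tensor_rep hc).
have -> : sfn (c :: s) w k = (fun t => if t \in c.1
    then sfn s (fun B => w B + rep_ev B c.2) k t else sfn s w k t).
  apply/funext => t; rewrite /sfn.
  case: (boolP (t \in c.1)) => ht; congr tnorm; apply/funext => B.
    by rewrite /fsub /fadd /sf_val big_cons indicE ht /=; ring.
  by rewrite /fsub /fadd /sf_val big_cons indicE (negbTE ht) /=; ring.
by apply: meas_if => //; [exact: IH | exact: IH].
Qed.

Lemma sfn0E (s : seq (set BT * trep)) (w : Fn) t :
  tnorm setT (fun B => w B + sf_val s t B) = sfn s w 0 t.
Proof.
by rewrite /sfn; congr tnorm; apply/funext => B; rewrite /fsub /fadd /fsc; ring.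
Qed.

End Meas.

Section Lint.
Context {R : realType} {X Y : normedModType R}.
Local Notation Fn := ((X -> Y -> R) -> R).
Local Notation trep := (@trep R X Y).
Local Notation BT := (g_sigma_algebraType (@open (X * Y)%type)).
Implicit Types (S : set Y) (r : trep) (F G : Fn) (B : X -> Y -> R).
Variable mu : {finite_measure set BT -> \bar R}.

Lemma mu_fin (A : set BT) : measurable A -> (fine (mu A))%:E = mu A.
Proof. by move=> mA; rewrite fineK // fin_num_measure. Qed.

Lemma mu_split (E A : set BT) : measurable E -> measurable A ->
  fine (mu E) = fine (mu (E `&` A)) + fine (mu (E `&` ~` A)).
Proof.
move=> mE mA; rewrite (measureDI mu mE mA) setDE fineD ?fin_num_measure //; last first.
- exact: measurableI.
- by apply: measurableI => //; exact: measurableC.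
by rewrite addrC.
Qed.

Lemma meas_EFin (D : set BT) (f : BT -> R) : measurable_fun setT f ->
  measurable (D) -> measurable_fun D (fun t => (f t)%:E).
Proof.
move=> mf mD; apply/(measurable_realfun.measurable_EFinP D f).
exact: measurable_funS mf.
Qed.

Lemma sfint_le (s : seq (set BT * trep)) (w : Fn) (D : set BT) :
  measurable D -> simple_ok setT s -> is_tensor setT w ->
  ((tnorm setT (fun B => fine (mu D) * w B +
       \sum_(c <- s) fine (mu (c.1 `&` D)) * rep_ev B c.2))%:E
   <= \int[mu]_(t in D) (tnorm setT (fun B => w B + sf_val s t B))%:E)%E.
Proof.
elim: s w D => [|c s IH] w D mD hs hw.
  rewrite (@tnorm_eqS _ _ _ setT _ (fsc (fine (mu D)) w)); last first.
    by move=> B _; rewrite big_nil addr0.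
  apply: (@le_trans _ _ ((fine (mu D)) * tnorm setT w)%:E).
    rewrite lee_fin; apply: le_trans (tnorm_sc _ hw) _.
    by rewrite ger0_norm // fine_ge0 // measure_ge0.
  rewrite (eq_integral (cst (tnorm setT w)%:E)); last first.
    move=> t _; congr EFin; congr tnorm; apply/funext => B.
    by rewrite /sf_val big_nil addr0.
  by rewrite integral_cst // -[X in (_ <= _ * X)%E](mu_fin mD) lee_fin mulrC.
have hs' : simple_ok setT s by move=> c' hc'; apply: hs; rewrite inE hc' orbT.
have [mc hc] : measurable c.1 /\ rep_in setT c.2 by apply: hs; rewrite inE eqxx.
have hw1 : is_tensor setT (fun B => w B + rep_ev B c.2).
  exact: is_tensor_add hw (is_tensor_rep hc).
set A := c.1.
have mD1 : measurable (D `&` A) by exact: measurableI.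
have mD2 : measurable (D `&` ~` A) by apply: measurableI => //; exact: measurableC.
have IH1 := IH _ _ mD1 hs' hw1.
have IH2 := IH _ _ mD2 hs' hw.
pose G1 := (fun B => fine (mu (D `&` A)) * (w B + rep_ev B c.2) +
      \sum_(c' <- s) fine (mu (c'.1 `&` (D `&` A))) * rep_ev B c'.2).
pose G2 := (fun B => fine (mu (D `&` ~` A)) * w B +
      \sum_(c' <- s) fine (mu (c'.1 `&` (D `&` ~` A))) * rep_ev B c'.2).
rewrite (@tnorm_eqS _ _ _ setT _ (fadd G1 G2)); last first.
  move=> B _; rewrite /fadd /G1 /G2 big_cons (mu_split mD mc) (setIC A D).
  have -> : \sum_(c' <- s) fine (mu (c'.1 `&` D)) * rep_ev B c'.2 =
     \sum_(c' <- s) fine (mu (c'.1 `&` (D `&` A))) * rep_ev B c'.2 +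
     \sum_(c' <- s) fine (mu (c'.1 `&` (D `&` ~` A))) * rep_ev B c'.2.
    rewrite -big_split /=; apply: eq_big_seq => c' hc'.
    have [mc' _] := hs' c' hc'.
    by rewrite (mu_split (measurableI _ _ mc' mD) mc) !setIA -mulrDl.
  ring.
have hG : tnorm setT (fadd G1 G2) <= tnorm setT G1 + tnorm setT G2.
  by apply: tnorm_add; exact: is_tensor_lin.
rewrite -lee_fin in hG; apply: le_trans hG _.
rewrite EFinD.
have hD : D = (D `&` A) `|` (D `&` ~` A) by rewrite -setDE setUIDK.
rewrite [X in (_ <= \int[mu]_(t in X) _)%E]hD ge0_integral_setU //; last first.
- by rewrite /disj_set setIACA setICr setI0.
- by move=> t _; rewrite lee_fin tnorm_ge0.
- rewrite -hD; apply: (eq_measurable_fun (fun t => (sfn (c :: s) w 0 t)%:E)).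
    by move=> t _; rewrite sfn0E.
  by apply: meas_EFin => //; exact: sfn_meas.
apply: leeD.
  apply: le_trans IH1 _; rewrite le_eqVlt; apply/orP; left; apply/eqP.
  apply: eq_integral => t; rewrite inE => -[_ ht]; congr EFin; congr tnorm.
  apply/funext => B; rewrite /sf_val big_cons indicE mem_set //= mul1r; ring.
apply: le_trans IH2 _; rewrite le_eqVlt; apply/orP; left; apply/eqP.
apply: eq_integral => t; rewrite inE => -[_ ht]; congr EFin; congr tnorm.
apply/funext => B; rewrite /sf_val big_cons indicE memNset //= mul0r; ring.
Qed.

End Lint.

Section PF.
Context d d' (T : measurableType d) (T' : measurableType d') (R : realType).
Variables (mu : {finite_measure set T -> \bar R}) (f : {mfun T >-> T'}).

Definition pf := pushforward mu f.

Let pf0 : pf set0 = 0%E.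
Proof. by rewrite /pf /pushforward preimage_set0 measure0. Qed.
Let pf_ge0 A : (0 <= pf A)%E.
Proof. exact: measure_ge0. Qed.
Let pf_sa : semi_sigma_additive pf.
Proof.
move=> F mF tF mUF; rewrite /pf /pushforward preimage_bigcup.
apply: measure_semi_sigma_additive.
- by move=> n; rewrite -[X in measurable X]setTI; exact: measurable_funP.
- apply/trivIsetP => /= i j _ _ ij; rewrite -preimage_setI.
  by move/trivIsetP : tF => /(_ _ _ _ _ ij) ->//; rewrite preimage_set0.
- by rewrite -preimage_bigcup -[X in measurable X]setTI; exact: measurable_funP.
Qed.

HB.instance Definition _ := isMeasure.Build _ _ _ pf pf0 pf_ge0 pf_sa.

Let pf_fin : fin_num_fun pf.
Proof.
move=> A mA; rewrite /pf /pushforward fin_num_measure //.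
by rewrite -[X in measurable X]setTI; exact: measurable_funP.
Qed.

HB.instance Definition _ := Measure_isFinite.Build _ _ _ pf pf_fin.

End PF.

Section Gen.
Context d (T : measurableType d) (R : realType).
Local Open Scope ereal_scope.

Lemma null_int (mu : {measure set T -> \bar R}) (N : set T) (f : T -> \bar R) :
  measurable N -> measurable_fun N f -> (forall x, N x -> 0 <= f x) ->
  mu N = 0 -> \int[mu]_(x in N) f x = 0.
Proof.
move=> mN mf f0 muN; rewrite -(integral_abs_eq0 mN mf muN).
by apply: eq_integral => x; rewrite inE => /f0 h; rewrite gee0_abs.
Qed.

Lemma int_shift (mu : {measure set T -> \bar R}) (D1 D2 : set T) (f : T -> \bar R) :
  measurable D1 -> measurable D2 -> D1 `<=` D2 -> mu (D2 `\` D1) = 0 ->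
  measurable_fun D2 f -> (forall x, D2 x -> 0 <= f x) ->
  \int[mu]_(x in D2) f x = \int[mu]_(x in D1) f x.
Proof.
move=> m1 m2 h12 h0 mf f0.
have hD : D2 = D1 `|` (D2 `\` D1) by rewrite setDUK.
have mD : measurable (D2 `\` D1) by exact: measurableD.
rewrite [in LHS]hD ge0_integral_setU //; last 3 first.
- by rewrite -hD.
- by rewrite -hD.
- by rewrite /disj_set setDE setICA setICr setI0.
rewrite (@null_int mu (D2 `\` D1) f) ?adde0 //.
  by apply: (measurable_funS m2 _ mf) => x [].

by move=> x [] /f0.
Qed.

Lemma mu_full (mu : {measure set T -> \bar R}) (D E : set T) :
  measurable D -> measurable E -> mu (~` D) = 0 -> mu (E `&` D) = mu E.
Proof.
move=> mD mE h0; rewrite [RHS](measureDI mu mE mD).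
rewrite -[LHS]add0e; congr (_ + _); apply/esym.
apply/eqP; rewrite eq_le measure_ge0 andbT -h0.
apply: le_measure; rewrite ?inE //; try exact: measurableC.
by apply: measurableD.
Qed.

End Gen.
Set Implicit Arguments. Unset Strict Implicit. Unset Printing Implicit Defensive.

Section Diff.
Context {R : realType} {X Y : normedModType R}.
Local Notation Fn := ((X -> Y -> R) -> R).
Local Notation trep := (@trep R X Y).
Local Notation BT := (g_sigma_algebraType (@open (X * Y)%type)).
Implicit Types (S : set Y) (r : trep) (F G : Fn) (B : X -> Y -> R).
Variable mu : {finite_measure set BT -> \bar R}.

Definition negl (b : seq (set BT * trep)) := [seq (c.1, rsc (-1) c.2) | c <- b].

Lemma simple_ok_cat S (a b : seq (set BT * trep)) :
  simple_ok S a -> simple_ok S b -> simple_ok S (a ++ negl b).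
Proof.
move=> ha hb c; rewrite mem_cat => /orP[/ha //|/mapP[c' hc' ->]] /=.
by have [m1 h1] := hb c' hc'; split => //; exact: rep_in_sc.
Qed.

Lemma is_tensor0 S : S 0 -> is_tensor S (fun _ : X -> Y -> R => 0 : R).
Proof.
move=> h0; apply: is_tensor_eqS (is_tensor_el 0 h0) => B [hB _].
by rewrite /fel bilin0l.
Qed.

Lemma sumE_cat S (a b : seq (set BT * trep)) (f : set BT * trep -> R) B :
  bform S B -> simple_ok S b ->
  \sum_(c <- a ++ negl b) f c * rep_ev B c.2 =
  \sum_(c <- a) f c * rep_ev B c.2 -
  \sum_(c <- b) f (c.1, rsc (-1) c.2) * rep_ev B c.2.
Proof.
move=> hB hb; rewrite big_cat big_map /= -sumrN; congr (_ + _).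
apply: eq_big_seq => c hc; have [_ h1] := hb c hc.
by rewrite (rep_ev_sc _ hB h1); ring.
Qed.

Lemma sfint_diff (a b : seq (set BT * trep)) (D : set BT) :
  measurable D -> mu (~` D) = 0%E -> simple_ok setT a -> simple_ok setT b ->
  ((tnorm setT (fun B => sf_int mu a B - sf_int mu b B))%:E
   <= \int[mu]_(t in D) (tnorm setT (fun B => sf_val a t B - sf_val b t B))%:E)%E.
Proof.
move=> mD h0 ha hb.
have hs := simple_ok_cat ha hb.
have := sfint_le mu mD hs (is_tensor0 (I : setT 0)).
rewrite (@tnorm_eqS _ _ _ setT _ (fun B => sf_int mu a B - sf_int mu b B)); last first.
  move=> B hB; rewrite mulr0 add0r (sumE_cat _ _ hB hb) /sf_int /=.
  congr (_ - _); apply: eq_big_seq => c hc.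
    by have [mc _] := ha c hc; rewrite mu_full.
  by have [mc _] := hb c hc; rewrite mu_full.
move/le_trans; apply; rewrite le_eqVlt; apply/orP; left; apply/eqP.
apply: eq_integral => t _; congr EFin; apply: tnorm_eqS => B hB.
by rewrite add0r /sf_val (sumE_cat _ _ hB hb).
Qed.

End Diff.
Set Implicit Arguments. Unset Strict Implicit. Unset Printing Implicit Defensive.

Lemma exists_min {R : realType} (f : nat -> R) n : (0 < n)%N ->
  exists i, (i < n)%N /\ forall j, (j < n)%N -> f i <= f j.
Proof.
elim: n => [//|n IH] _.
case: n IH => [|n] IH.
  by exists 0%N; split => // -[|j].
have [i [hi hm]] := IH isT.
case: (ltP (f n.+1) (f i)) => hfi.
  exists n.+1; split => // j; rewrite ltnS leq_eqVlt => /orP[/eqP ->//|/hm].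
  by move/(lt_le_trans hfi)/ltW.
exists i; split; first by rewrite (ltn_trans hi).
by move=> j; rewrite ltnS leq_eqVlt => /orP[/eqP ->//|/hm].
Qed.

Lemma exists_first_min {R : realType} (f : nat -> R) n : (0 < n)%N ->
  exists i, [/\ (i < n)%N, forall j, (j < n)%N -> f i <= f j &
     forall j, (j < i)%N -> f i < f j].
Proof.
move=> n0.
pose p := fun i => (i < n)%N && `[< forall j, (j < n)%N -> f i <= f j >].
have hp : exists i, p i.
  have [i [hi hm]] := exists_min f n0.
  by exists i; rewrite /p hi /=; apply/asboolP.
case: (ex_minnP hp) => i /andP[hi /asboolP hm] hmin.
exists i; split => // j ji.
have jn : (j < n)%N by exact: ltn_trans hi.
rewrite ltNge; apply/negP => hij.
have : p j.
  rewrite /p jn /=; apply/asboolP => k /hm; exact: le_trans.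
by move/hmin; rewrite leqNgt ji.
Qed.

Section Cells.
Context {R : realType} {X Y : normedModType R}.
Local Notation Fn := ((X -> Y -> R) -> R).
Local Notation trep := (@trep R X Y).
Local Notation BT := (g_sigma_algebraType (@open (X * Y)%type)).
Implicit Types (S : set Y) (r : trep) (F G : Fn) (B : X -> Y -> R).

Definition z0 : trep := rel1 0 0.

Fixpoint vals (s : seq (set BT * trep)) : seq trep :=
  if s is c :: s' then vals s' ++ map (ril c.2) (vals s') else [:: z0].

Lemma vals_in S s : S 0 -> simple_ok S s -> forall w, w \in vals s -> rep_in S w.
Proof.
move=> S0; elim: s => [|c s IH] hs w /=.
  by rewrite inE => /eqP ->; exact: rep_in_el.
have hs' : simple_ok S s by move=> c' hc'; apply: hs; rewrite inE hc' orbT.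
have [_ hc] : measurable c.1 /\ rep_in S c.2 by apply: hs; rewrite inE eqxx.
rewrite mem_cat => /orP[/(IH hs')//|/mapP[w' hw' ->]].
exact: rep_in_il hc (IH hs' _ hw').
Qed.

Lemma vals_size s : (0 < size (vals s))%N.
Proof. by elim: s => [//|c s IH] /=; rewrite size_cat addn_gt0 IH. Qed.

Lemma vals_ev s t : simple_ok setT s ->
  exists2 w, w \in vals s & forall B, bform setT B -> rep_ev B w = sf_val s t B.
Proof.
elim: s => [|c s IH] hs.
  exists z0; first by rewrite inE.
  by move=> B [hB _]; rewrite rep_ev_el // bilin0l // /sf_val big_nil.
have hs' : simple_ok setT s by move=> c' hc'; apply: hs; rewrite inE hc' orbT.
have [_ hc] : measurable c.1 /\ rep_in setT c.2 by apply: hs; rewrite inE eqxx.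
have [w hw hwe] := IH hs'.
have hwin := vals_in (I : setT 0) hs' hw.
case: (boolP (t \in c.1)) => ht.
  exists (ril c.2 w); first by rewrite /= mem_cat; apply/orP; right; apply: map_f.
  move=> B hB; rewrite (rep_ev_il hB hc hwin) hwe // /sf_val big_cons indicE ht /=.
  by rewrite mul1r.
exists w; first by rewrite /= mem_cat hw.
move=> B hB; rewrite hwe // /sf_val big_cons indicE (negbTE ht) /= mul0r add0r.
by [].
Qed.

Definition dist_fn (w : trep) (t : X * Y) : R :=
  tnorm setT (fsub (tens_of w) (fsc 1 (fel t.1 t.2))).

Lemma dist_meas w : rep_in setT w -> measurable_fun (setT : set BT) (fun t : BT => dist_fn w t).
Proof. by move=> hw; apply: cont_meas; apply: tn_cont; exact: is_tensor_rep. Qed.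

Definition cell (W : seq trep) (i : nat) : set BT :=
  [set t | (forall j, (j < i)%N -> dist_fn (nth z0 W i) t < dist_fn (nth z0 W j) t) /\
           (forall j, (j < size W)%N -> dist_fn (nth z0 W i) t <= dist_fn (nth z0 W j) t)].

Definition cells (W : seq trep) : seq (set BT * trep) :=
  [seq (cell W i, nth z0 W i) | i <- iota 0 (size W)].

Lemma nth_in (W : seq trep) j : (forall w, w \in W -> rep_in setT w) ->
  rep_in setT (nth z0 W j).
Proof.
move=> hW; case: (ltnP j (size W)) => hj; first by apply: hW; exact: mem_nth.
by rewrite nth_default //; exact: rep_in_el.
Qed.

Lemma meas_lt (f g : BT -> R) : measurable_fun setT f -> measurable_fun setT g ->
  measurable [set t : BT | f t < g t].
Proof.
move=> mf mg.
have := @measurable_lte _ BT R setT measurableT (fun t => (f t)%:E) (fun t => (g t)%:E).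
rewrite setTI; apply.
- by apply/(measurable_EFinP setT f).
- by apply/(measurable_EFinP setT g).
Qed.

Lemma meas_le (f g : BT -> R) : measurable_fun setT f -> measurable_fun setT g ->
  measurable [set t : BT | f t <= g t].
Proof.
move=> mf mg.
have := @measurable_lee _ BT R setT measurableT (fun t => (f t)%:E) (fun t => (g t)%:E).
rewrite setTI; apply.
- by apply/(measurable_EFinP setT f).
- by apply/(measurable_EFinP setT g).
Qed.

Lemma cell_meas W i : (forall w, w \in W -> rep_in setT w) -> measurable (cell W i).
Proof.
move=> hW.
have -> : cell W i =
  (\bigcap_j [set t | (j < i)%N -> dist_fn (nth z0 W i) t < dist_fn (nth z0 W j) t]) `&`
  (\bigcap_j [set t | (j < size W)%N -> dist_fn (nth z0 W i) t <= dist_fn (nth z0 W j) t]).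
  apply/seteqP; split => t /= [h1 h2].
    by split => j _; [exact: h1 | exact: h2].
  by split => j; [exact: (h1 j I) | exact: (h2 j I)].
apply: measurableI; apply: bigcapT_measurable => j; cbv beta.
  have [hj|hj] : (j < i)%N \/ ~~ (j < i)%N by case: (j < i)%N; [left|right].
    have -> : [set t : BT | (j < i)%N -> dist_fn (nth z0 W i) t < dist_fn (nth z0 W j) t] =
      [set t | dist_fn (nth z0 W i) t < dist_fn (nth z0 W j) t].
      by apply/seteqP; split => t /=; [apply|move=> h _].
    by apply: meas_lt; apply: dist_meas; exact: nth_in.
  have -> : [set t : BT | (j < i)%N -> dist_fn (nth z0 W i) t < dist_fn (nth z0 W j) t] = setT.
    by apply/seteqP; split => t //= _ h; rewrite h in hj.
  exact: measurableT.
have [hj|hj] : (j < size W)%N \/ ~~ (j < size W)%N by case: (j < size W)%N; [left|right].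
  have -> : [set t : BT | (j < size W)%N -> dist_fn (nth z0 W i) t <= dist_fn (nth z0 W j) t] =
    [set t | dist_fn (nth z0 W i) t <= dist_fn (nth z0 W j) t].
    by apply/seteqP; split => t /=; [apply|move=> h _].
  by apply: meas_le; apply: dist_meas; exact: nth_in.
have -> : [set t : BT | (j < size W)%N -> dist_fn (nth z0 W i) t <= dist_fn (nth z0 W j) t] = setT.
  by apply/seteqP; split => t //= _ h; rewrite h in hj.
exact: measurableT.
Qed.

Lemma cell_cover W t : (0 < size W)%N -> exists2 i, (i < size W)%N & cell W i t.
Proof.
move=> hW; have [i [hi h1 h2]] := exists_first_min (fun j => dist_fn (nth z0 W j) t) hW.
by exists i => //; split.
Qed.

Lemma cell_uniq W t i j : (i < size W)%N -> (j < size W)%N ->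
  cell W i t -> cell W j t -> i = j.
Proof.
move=> hi hj [h1 h2] [h3 h4]; apply/eqP; case: (ltngtP i j) => // hij.
  by have := h3 _ hij; rewrite ltNge h2.
by have := h1 _ hij; rewrite ltNge h4.
Qed.

Lemma sfv_cells W t i : (i < size W)%N -> cell W i t ->
  forall B, sf_val (cells W) t B = rep_ev B (nth z0 W i).
Proof.
move=> hi hc B; rewrite /sf_val big_map.
have hin : i \in iota 0 (size W) by rewrite mem_iota.
rewrite (bigD1_seq i hin (iota_uniq _ _)) /= indicE mem_set // mul1r.
rewrite big1_seq ?addr0 // => j /andP[hji]; rewrite mem_iota add0n => /andP[_ hj].
rewrite indicE; case: (boolP (t \in cell W j)) => htj; last by rewrite mul0r.
by move: hji; rewrite (cell_uniq hj hi (set_mem htj) hc) eqxx.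
Qed.

Lemma cells_ok W : (forall w, w \in W -> rep_in setT w) -> simple_ok setT (cells W).
Proof.
move=> hW c /mapP[i _ ->]; split; first exact: cell_meas.
exact: nth_in.
Qed.

End Cells.
Set Implicit Arguments. Unset Strict Implicit. Unset Printing Implicit Defensive.

Section Main.
Context {R : realType} {X Y : normedModType R}.
Local Notation Fn := ((X -> Y -> R) -> R).
Local Notation trep := (@trep R X Y).
Local Notation BT := (g_sigma_algebraType (@open (X * Y)%type)).
Implicit Types (S : set Y) (r : trep) (F G : Fn) (B : X -> Y -> R).
Variable P : {linear Y -> Y}.
Hypothesis Pn : forall y, `|P y| <= `|y|.

Definition gP (t : BT) : BT := ((t.1, P t.2) : X * Y).

Lemma P_cont : continuous P.
Proof.
move=> y; apply/cvgrPdist_lt => e e0; near=> y'.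
rewrite -linearB; apply: le_lt_trans (Pn _) _.
by near: y'; apply: cvgr_dist_lt.
Unshelve. all: by end_near. Qed.

Lemma gP_cont : continuous (gP : X * Y -> X * Y).
Proof.
move=> t; apply: cvg_pair; first exact: cvg_fst.
apply: continuous_comp; first exact: cvg_snd.
exact: P_cont.
Qed.

Lemma gP_meas : measurable_fun (setT : set BT) gP.
Proof.
apply: (@measurability _ _ BT BT setT gP (@open (X * Y)%type)) => //.
move=> _ [A oA <-]; apply: sub_sigma_algebra; rewrite setTI.
by move/continuousP: gP_cont; apply.
Qed.

Definition gPm : {mfun BT >-> BT} := HB.pack gP (isMeasurableFun.Build _ _ BT BT gP gP_meas).

Variable mu : {finite_measure set BT -> \bar R}.
Definition nu := pf mu gPm.

Lemma nu_int (f : BT -> R) (D : set BT) : measurable D -> measurable_fun setT f ->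
  (forall t, 0 <= f t) ->
  (\int[nu]_(t in D) (f t)%:E = \int[mu]_(t in gP @^-1` D) (f (gP t))%:E)%E.
Proof.
move=> mD mf f0.
have := @ge0_integral_pushforward _ _ BT BT R gP gP_meas mu D (fun t => (f t)%:E) mD.
apply.
- by apply/measurable_EFinP; exact: measurable_funS mf.
- by move=> t _; rewrite lee_fin.
Qed.


Lemma is_tensor_sfint S (m : {finite_measure set BT -> \bar R}) s : S 0 -> simple_ok S s ->
  is_tensor S (sf_int m s).
Proof.
move=> S0 hs; apply: is_tensor_eqS (is_tensor_lin (fun c => fine (m c.1)) 0 hs (is_tensor0 S0)).
by move=> B _; rewrite mulr0 add0r.
Qed.

Lemma hform B : bform setT B -> bform setT (fun x y => B x (P y)).
Proof. by move=> hB; apply: (bform_comp Pn) hB. Qed.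

Lemma KB (s : seq (set BT * trep)) t : simple_ok setT s ->
  tnorm setT (fun B => sf_val (cells (map (rmap P) (vals s))) (gP t) B - elem (gP t) B)
  <= tnorm setT (fun B => sf_val s t B - elem t B).
Proof.
move=> hs; set W := map (rmap P) (vals s).
have hWs : (0 < size W)%N by rewrite size_map vals_size.
have [i hi hci] := cell_cover (gP t) hWs.
rewrite (@tnorm_eqS _ _ _ setT _ (fsub (tens_of (nth z0 W i)) (fsc 1 (fel (gP t).1 (gP t).2)))); last first.
  by move=> B _; rewrite (sfv_cells hi hci) /fsub /fadd /fsc /fel /elem /tens_of; ring.
change (dist_fn (nth z0 W i) (gP t) <= tnorm setT (fun B => sf_val s t B - elem t B)).
have [w hw hwe] := vals_ev t hs.
pose j := index w (vals s).
have hj : (j < size W)%N by rewrite size_map index_mem.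
apply: le_trans (hci.2 j hj) _.
have -> : nth z0 W j = rmap P w by rewrite (nth_map z0) ?index_mem // nth_index.
have hwin := vals_in (I : setT 0) hs hw.
rewrite /dist_fn.
have -> : fsub (tens_of (rmap P w)) (fsc 1 (fel (gP t).1 (gP t).2)) =
  fpm P (fsub (tens_of w) (fsc 1 (fel t.1 t.2))) by [].
apply: le_trans (tnorm_map (S1 := setT) hform (fun _ => I) Pn _) _.
  apply: is_tensor_sub (is_tensor_rep hwin) (is_tensor_sc _ (is_tensor_el _ _)) => //.
rewrite le_eqVlt; apply/orP; left; apply/eqP; apply: tnorm_eqS => B hB.
by rewrite /fsub /fadd /fsc /fel /tens_of /elem hwe //; ring.
Qed.


Lemma indic_pre (A : set BT) t : \1_(gP @^-1` A) t = \1_A (gP t) :> R.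
Proof. by rewrite !indicE; congr (_%:R); apply/idP/idP; rewrite !inE. Qed.

Lemma sP_ok (s : seq (set BT * trep)) : simple_ok setT s -> simple_ok setT [seq (c.1, rmap P c.2) | c <- s].
Proof.
move=> hs c /mapP[c' hc' ->]; have [m1 h1] := hs c' hc'; split => //.
exact: rep_in_map (fun _ => I) Pn h1.
Qed.

Lemma sig_ok (s : seq (set BT * trep)) : simple_ok setT s -> simple_ok setT
  [seq (gP @^-1` c.1, c.2) | c <- cells (map (rmap P) (vals s))].
Proof.
move=> hs.
have hWin : forall w, w \in map (rmap P) (vals s) -> rep_in setT w.
  move=> w /mapP[w' hw' ->]; apply: (rep_in_map (S1 := setT) (fun _ => I) Pn).
  by have := vals_in (I : setT 0) hs hw'.
move=> c /mapP[c' hc' ->]; have [m1 h1] := cells_ok hWin hc'; split => //=.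
by rewrite -[X in measurable X]setTI; apply: gP_meas.
Qed.

Lemma pw_bound (s : seq (set BT * trep)) t : simple_ok setT s ->
  tnorm setT (fun B => sf_val [seq (gP @^-1` c.1, c.2) | c <- cells (map (rmap P) (vals s))] t B
      - sf_val [seq (c.1, rmap P c.2) | c <- s] t B)
  <= 2 * tnorm setT (fun B => sf_val s t B - elem t B).
Proof.
move=> hs.
set sig := cells (map (rmap P) (vals s)).
have hWin : forall w, w \in map (rmap P) (vals s) -> rep_in setT w.
  move=> w /mapP[w' hw' ->]; apply: (rep_in_map (S1 := setT) (fun _ => I) Pn).
  by have := vals_in (I : setT 0) hs hw'.
have hsig : simple_ok setT sig by exact: cells_ok.
pose A := fun B => sf_val sig (gP t) B - elem (gP t) B.
pose Bf := fun B => elem (gP t) B - sf_val [seq (c.1, rmap P c.2) | c <- s] t B.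
have iA : is_tensor setT A.
  apply: is_tensor_eqS (is_tensor_sub (is_tensor_sfv (gP t) hsig (is_tensor0 (I : setT 0)))
     (is_tensor_el (gP t).1 (I : setT (gP t).2))) => B _.
  by rewrite /fsub /fadd /fsc /fel /A /elem; ring.
have iC : is_tensor setT (fun B => elem t B - sf_val s t B).
  apply: is_tensor_eqS (is_tensor_sub (is_tensor_el t.1 (I : setT t.2))
     (is_tensor_sfv t hs (is_tensor0 (I : setT 0)))) => B _.
  by rewrite /fsub /fadd /fsc /fel /elem; ring.
have iB : is_tensor setT Bf.
  apply: is_tensor_eqS (is_tensor_map (S1 := setT) hform (fun _ => I) Pn iC) => B _.
  by rewrite /fpm /Bf /elem /sf_val big_map.
rewrite (@tnorm_eqS _ _ _ setT _ (fadd A Bf)); last first.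
  move=> B _; rewrite /fadd /A /Bf /sf_val big_map.
  under eq_bigr do rewrite indic_pre.
  ring.
apply: le_trans (tnorm_add iA iB) _.
have h1 : tnorm setT A <= tnorm setT (fun B => sf_val s t B - elem t B) by exact: KB.
have h2 : tnorm setT Bf <= tnorm setT (fun B => sf_val s t B - elem t B).
  rewrite (@tnorm_eqS _ _ _ setT _ (fpm P (fun B => elem t B - sf_val s t B))); last first.
    by move=> B _; rewrite /fpm /Bf /elem /sf_val big_map.
  apply: le_trans (tnorm_map (S1 := setT) hform (fun _ => I) Pn iC) _.
  have hE : is_tensor setT (fun B => elem t B) by exact: (is_tensor_el t.1 (I : setT t.2)).
  have hS : is_tensor setT (fun B => sf_val s t B).
    apply: is_tensor_eqS (is_tensor_sfv t hs (is_tensor0 (I : setT 0))) => B _.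
    by rewrite add0r.
  have e1 : tnorm setT (fun B => elem t B - sf_val s t B) =
    tnorm setT (fsub (fun B => elem t B) (fun B => sf_val s t B)).
    by apply: tnorm_eqS => B _; rewrite /fsub /fadd /fsc; ring.
  have e2 : tnorm setT (fun B => sf_val s t B - elem t B) =
    tnorm setT (fsub (fun B => sf_val s t B) (fun B => elem t B)).
    by apply: tnorm_eqS => B _; rewrite /fsub /fadd /fsc; ring.
  by rewrite e1 e2 (tnorm_subC hE hS).
lra.
Qed.


Lemma sig_meas (s : seq (set BT * trep)) : simple_ok setT s ->
  measurable_fun setT (fun t : BT => tnorm setT (fun B =>
    sf_val [seq (gP @^-1` c.1, c.2) | c <- cells (map (rmap P) (vals s))] t B
      - sf_val [seq (c.1, rmap P c.2) | c <- s] t B)).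
Proof.
move=> hs; have hsig' := sig_ok hs; have hsP := sP_ok hs.
apply: (eq_measurable_fun (sfn ([seq (gP @^-1` c.1, c.2) | c <- cells (map (rmap P) (vals s))] ++ negl [seq (c.1, rmap P c.2) | c <- s]) (fun _ => 0) 0)).
  move=> t _; rewrite /sfn; apply: tnorm_eqS => B hB.
  rewrite /fsub /fadd /fsc /sf_val (sumE_cat _ (fun c => \1_(c.1) t) hB hsP) /=; ring.
exact: (sfn_meas 0 (simple_ok_cat hsig' hsP) (is_tensor0 (I : setT 0))).
Qed.

Lemma SB (s : seq (set BT * trep)) (r : trep) (Z : set Y) :
  (forall z, Z z -> P z = z) -> rep_in Z r -> simple_ok setT s ->
  mu (~` ballD setT) = 0%E ->
  measurable_fun (ballD setT) (fun t : BT => tnorm setT (fun B => sf_val s t B - elem t B)) ->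
  ((tnorm setT (fun B => sf_int nu (cells (map (rmap P) (vals s))) B - tens_of r B))%:E <=
   2%:E * \int[mu]_(t in ballD setT) (tnorm setT (fun B => sf_val s t B - elem t B))%:E
   + (tnorm setT (fun B => sf_int mu s B - tens_of r B))%:E)%E.
Proof.
move=> Pid hr hs m0 hm.
set sig := cells (map (rmap P) (vals s)).
pose sig' := [seq (gP @^-1` c.1, c.2) | c <- sig].
pose sP := [seq (c.1, rmap P c.2) | c <- s].
have hsig' : simple_ok setT sig' := sig_ok hs.
have hsP : simple_ok setT sP := sP_ok hs.
have hF : is_tensor setT (tens_of r).
  by apply: is_tensor_rep; apply: (rep_in_sub (S2 := setT)) hr.
have -> : (fun B => sf_int nu sig B - tens_of r B) = (fun B => sf_int mu sig' B - tens_of r B).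
  by apply/funext => B; rewrite /sf_int [in RHS]big_map.
pose T1 := fun B => sf_int mu sig' B - sf_int mu sP B.
pose T2 := fun B => sf_int mu sP B - tens_of r B.
have iT1 : is_tensor setT T1.
  apply: is_tensor_eqS (is_tensor_sub (is_tensor_sfint mu (I : setT 0) hsig')
    (is_tensor_sfint mu (I : setT 0) hsP)) => B _.
  by rewrite /fsub /fadd /fsc /T1; ring.
have iS : is_tensor setT (fun B => sf_int mu s B - tens_of r B).
  apply: is_tensor_eqS (is_tensor_sub (is_tensor_sfint mu (I : setT 0) hs) hF) => B _.
  by rewrite /fsub /fadd /fsc; ring.
have iT2 : is_tensor setT T2.
  apply: is_tensor_eqS (is_tensor_sub (is_tensor_sfint mu (I : setT 0) hsP) hF) => B _.
  by rewrite /fsub /fadd /fsc /T2; ring.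
rewrite (@tnorm_eqS _ _ _ setT _ (fadd T1 T2)); last first.
  by move=> B _; rewrite /fadd /T1 /T2; ring.
have h12 := tnorm_add iT1 iT2; rewrite -lee_fin in h12.
apply: (le_trans h12); rewrite EFinD; apply: leeD.
  apply: le_trans (sfint_diff (ballD_meas closedT) m0 hsig' hsP) _.
  have mD : measurable (ballD setT : set BT) by apply: ballD_meas; exact: closedT.
  rewrite -(ge0_integralZl mu mD); last 3 first.
  - by apply/measurable_EFinP.
  - by move=> t _; rewrite lee_fin tnorm_ge0.
  - by rewrite lee_fin.
  apply: ge0_le_integral => //.
  - by move=> t _; rewrite lee_fin tnorm_ge0.
  - by apply: meas_EFin => //; exact: sig_meas.
  - apply: (eq_measurable_fun (fun t => (2 * tnorm setT (fun B => sf_val s t B - elem t B))%:E)).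
      by move=> t _; rewrite EFinM.
    apply/measurable_EFinP; apply: measurable_funM => //; exact: measurable_cst.
  - by move=> t _; rewrite -EFinM lee_fin; exact: pw_bound.
rewrite lee_fin.
rewrite (@tnorm_eqS _ _ _ setT _ (fpm P (fun B => sf_int mu s B - tens_of r B))); last first.
  move=> B _; rewrite /fpm /T2; congr (_ - _); first by rewrite /sf_int big_map.
  change (tens_of r B = fpm P (tens_of r) B); by rewrite (fmap_tens Pid hr).
exact: (tnorm_map (S1 := setT) hform (fun _ => I) Pn iS).
Qed.


Lemma HZ (Z : set Y) (s : seq (set BT * trep)) (t : BT) : Z 0 -> simple_ok Z s -> Z t.2 ->
  is_tensor Z (fun B => sf_val s t B - elem t B).
Proof.
move=> Z0 hs ht.
apply: is_tensor_eqS (is_tensor_sub (is_tensor_sfv t hs (is_tensor0 Z0)) (is_tensor_el t.1 ht)).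
by move=> B _; rewrite /fsub /fadd /fsc /fel /elem; ring.
Qed.

Lemma sigZ_ok (Z : set Y) (s : seq (set BT * trep)) : (forall y, Z (P y)) ->
  simple_ok setT s -> simple_ok Z (cells (map (rmap P) (vals s))).
Proof.
move=> Pr hs.
have hWin : forall w, w \in map (rmap P) (vals s) -> rep_in setT w.
  move=> w /mapP[w' hw' ->]; apply: (rep_in_map (S1 := setT) (fun _ => I) Pn).
  by have := vals_in (I : setT 0) hs hw'.
move=> c hc; have [mc _] := cells_ok hWin hc; split => //.
move: hc => /mapP[i]; rewrite mem_iota add0n => /andP[_ hi] -> /=.
rewrite (nth_map z0); last by rewrite size_map in hi.
apply: (rep_in_map (S1 := setT) Pr Pn).
apply: (vals_in (I : setT 0) hs); apply: mem_nth; by rewrite size_map in hi.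
Qed.

Lemma INT (Z : set Y) (s : seq (set BT * trep)) :
  closed Z -> Z 0 -> (forall z, Z z -> P z = z) -> (forall y, Z (P y)) ->
  simple_ok setT s -> mu (~` ballD setT) = 0%E ->
  measurable_fun (ballD setT) (fun t : BT => tnorm setT (fun B => sf_val s t B - elem t B)) ->
  (\int[nu]_(t in ballD Z)
     (tnorm Z (fun B => sf_val (cells (map (rmap P) (vals s))) t B - elem t B))%:E <=
   \int[mu]_(t in ballD setT) (tnorm setT (fun B => sf_val s t B - elem t B))%:E)%E.
Proof.
move=> Zcl Z0 Pid Pr hs m0 hm.
set sig := cells (map (rmap P) (vals s)).
have hsigZ : simple_ok Z sig := sigZ_ok Pr hs.
have hsig : simple_ok setT sig.
  move=> c hc; have [m1 h1] := hsigZ c hc; split => //.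
  exact: (rep_in_sub (S1 := Z)) h1.
have mh : measurable_fun setT (fun t : BT => tnorm setT (fun B => sf_val sig t B - elem t B)).
  apply: (eq_measurable_fun (sfn sig (fun _ => 0) 1)); last first.
    exact: (sfn_meas 1 hsig (is_tensor0 (I : setT 0))).
  move=> t _; rewrite /sfn; congr tnorm; apply/funext => B.
  by rewrite /fsub /fadd /fsc /fel /elem; ring.
have mDZ : measurable (ballD Z : set BT) by exact: ballD_meas.
have mDT : measurable (ballD setT : set BT) by apply: ballD_meas; exact: closedT.
rewrite (eq_integral (fun t => (tnorm setT (fun B => sf_val sig t B - elem t B))%:E)); last first.
  move=> t; rewrite inE => -[_ [_ ht]]; congr EFin.
  by rewrite (tnorm_TZ Pn Pid Pr (HZ Z0 hsigZ ht)).
apply: le_trans (ge0_subset_integral nu mDZ measurableT _ _ (@subsetT _ _)) _.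
- exact: meas_EFin.
- by move=> t _; rewrite lee_fin tnorm_ge0.
rewrite nu_int //; last by move=> t; exact: tnorm_ge0.
rewrite preimage_setT (@int_shift _ _ _ mu (ballD setT) setT) //; last 3 first.
- by rewrite setTD.
- apply: meas_EFin => //.
  exact: (measurableT_comp mh gP_meas).
- by move=> t _; rewrite lee_fin tnorm_ge0.
apply: ge0_le_integral => //.
- by move=> t _; rewrite lee_fin tnorm_ge0.
- apply: meas_EFin => //; exact: (measurableT_comp mh gP_meas).
- by apply/measurable_EFinP.
- by move=> t _; rewrite lee_fin; exact: KB.
Qed.

End Main.
Unset Implicit Arguments.

Lemma sfv_meas {R : realType} {X Y : normedModType R} (s : seq (set (g_sigma_algebraType (@open (X * Y)%type)) * trep)) :
  simple_ok setT s ->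
  measurable_fun setT (fun t : g_sigma_algebraType (@open (X * Y)%type) =>
     tnorm setT (fun B : X -> Y -> R => sf_val s t B - elem t B)).
Proof.
move=> hs; apply: (eq_measurable_fun (sfn s (fun _ => 0) 1)); last first.
  exact: (sfn_meas 1 hs (is_tensor0 (I : setT 0))).
move=> t _; rewrite /sfn; congr tnorm; apply/funext => B.
by rewrite /fsub /fadd /fsc /fel /elem; ring.
Qed.

Theorem lemma2p9 (R : realType) (X Y : completeNormedModType R)
    (Z : set Y) (P : {linear Y -> Y})
    (Z0 : Z 0) (Zlin : forall (a : R) y1 y2, Z y1 -> Z y2 -> Z (a *: y1 + y2))
    (Zcl : closed Z)
    (Prange : forall y, Z (P y)) (Pid : forall z, Z z -> P z = z)
    (Pnorm_le : forall y, `|P y| <= `|y|)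
    (Pnorm_sup : forall e : R, 0 < e -> exists y, `|y| <= 1 /\ 1 - e < `|P y|) :
  forall r : @trep R X Y, rep_in Z r ->
    (INA setT (tens_of r) <-> INA Z (tens_of r)).
Proof.
move=> r hr.
have hFZ : is_tensor Z (tens_of r) := is_tensor_rep hr.
have hrT : rep_in setT r by apply: (rep_in_sub (S1 := Z)) hr.
have hFT : is_tensor setT (tens_of r) := is_tensor_rep hrT.
have eTZ : tnorm setT (tens_of r) = tnorm Z (tens_of r) := tnorm_TZ Pnorm_le Pid Prange hFZ.
have mDZ : measurable (ballD Z : set (g_sigma_algebraType (@open (X * Y)%type))) by exact: ballD_meas.
have mDT : measurable (ballD setT : set (g_sigma_algebraType (@open (X * Y)%type))).
  by apply: ballD_meas; exact: closedT.
have hZTF : forall (m : {finite_measure set (g_sigma_algebraType (@open (X * Y)%type)) -> \bar R}) s,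
    simple_ok Z s -> is_tensor Z (fun B => sf_int m s B - tens_of r B).
  move=> m s hs; apply: is_tensor_eqS (is_tensor_sub (is_tensor_sfint m Z0 hs) hFZ) => B _.
  by rewrite /fsub /fadd /fsc; ring.
split.
- move=> [_ [mu [m0 [mT [s [hs [hm [hi hc]]]]]]]].
  split => //.
  exists (pf mu (gPm Pnorm_le)).
  split; [|split].
  + rewrite /= /pf /pushforward.
    apply/eqP; rewrite eq_le measure_ge0 andbT -m0.
    apply: le_measure; rewrite ?inE.
    * by rewrite -[X in measurable X]setTI; apply: gP_meas => //; exact: measurableC.
    * exact: measurableC.
    * move=> t /= hn hT; apply: hn; case: hT => h1 [h2 _]; split => //=; split.
        exact: le_trans (Pnorm_le _) h2.
      exact: Prange.
  + by rewrite /= /pf /pushforward preimage_setT mT eTZ.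
  + exists (fun k => cells (map (rmap P) (vals (s k)))).
    split; [|split; [|split]].
    * by move=> k; exact: sigZ_ok.
    * move=> k.
      apply: (eq_measurable_fun (fun t => tnorm setT (fun B =>
         sf_val (cells (map (rmap P) (vals (s k)))) t B - elem t B))).
        move=> t; rewrite inE => -[_ [_ ht]].
        exact: (tnorm_TZ Pnorm_le Pid Prange (HZ Z0 (sigZ_ok Pnorm_le Prange (hs k)) ht)).
      apply: (measurable_funS measurableT) => //.
      apply: sfv_meas; move=> c hcc; have [m1 h1] := sigZ_ok Pnorm_le Prange (hs k) hcc.
      by split => //; apply: (rep_in_sub (S1 := Z)) h1.
    * apply: (squeeze_cvge _ (cvg_cst 0%E) hi).
      near=> k; apply/andP; split.
        by apply: integral_ge0 => t _; rewrite lee_fin tnorm_ge0.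
      exact: (INT Pnorm_le Zcl Z0 Pid Prange (hs k) m0 (hm k)).
    * have hcE : (fun k => ((tnorm setT (fun B => sf_int mu (s k) B - tens_of r B))%:E)) @ \oo --> 0%E.
        by apply/fine_cvgP; split => //; near=> k.
      have hs2 : (fun k => (2%:E * \int[mu]_(t in ballD setT)
          (tnorm setT (fun B => sf_val (s k) t B - elem t B))%:E +
          (tnorm setT (fun B => sf_int mu (s k) B - tens_of r B))%:E)%E) @ \oo --> 0%E.
        rewrite -[0%E]adde0; apply: cvgeD => //.
        by rewrite -(mule0 2%:E); apply: cvgeZl.
      have hE : (fun k => ((tnorm Z (fun B => sf_int (pf mu (gPm Pnorm_le))
            (cells (map (rmap P) (vals (s k)))) B - tens_of r B))%:E)) @ \oo --> 0%E.
        apply: (@squeeze_cvge _ _ _ _ (fun _ => 0%E) _ _ _ _ (cvg_cst _) hs2).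
        near=> k; apply/andP; split; first by rewrite lee_fin tnorm_ge0.
        rewrite -(tnorm_TZ Pnorm_le Pid Prange); last first.
          by apply: hZTF; exact: sigZ_ok.
        exact: (SB Pnorm_le Pid hr (hs k) m0 (hm k)).
      by move/fine_cvgP: hE => [].
- move=> [_ [mu [m0 [mT [s [hs [hm [hi hc]]]]]]]].
  have hsT : forall k, simple_ok setT (s k).
    by move=> k c hcc; have [m1 h1] := hs k c hcc; split => //; apply: (rep_in_sub (S1 := Z)) h1.
  split => //; exists mu; split; [|split].
  + apply/eqP; rewrite eq_le measure_ge0 andbT -m0.
    apply: le_measure; rewrite ?inE; try exact: measurableC.
    move=> t /= hn hZ; apply: hn; case: hZ => h1 [h2 _]; by split.
  + by rewrite mT eTZ.
  + exists s; split; [|split; [|split]].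
    * exact: hsT.
    * move=> k; apply: (measurable_funS measurableT) => //; exact: sfv_meas.
    * have -> : (fun k => (\int[mu]_(t in ballD setT)
          (tnorm setT (fun B => sf_val (s k) t B - elem t B))%:E)%E) =
        (fun k => (\int[mu]_(t in ballD Z)
          (tnorm Z (fun B => sf_val (s k) t B - elem t B))%:E)%E).
        apply/funext => k.
        rewrite (@int_shift _ _ _ mu (ballD Z) (ballD setT)) //; last 4 first.
        - by move=> t [h1 [h2 _]].
        - apply/eqP; rewrite eq_le measure_ge0 andbT -m0.
          apply: le_measure; rewrite ?inE; try exact: measurableC.
            exact: measurableD.
          by move=> t [].
        - apply: meas_EFin => //; exact: sfv_meas.
        - by move=> t _; rewrite lee_fin tnorm_ge0.
        apply: eq_integral => t; rewrite inE => -[_ [_ ht]]; congr EFin.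
        exact: (tnorm_TZ Pnorm_le Pid Prange (HZ Z0 (hs k) ht)).
      exact: hi.
    * have -> : (fun k => tnorm setT (fun B => sf_int mu (s k) B - tens_of r B)) =
        (fun k => tnorm Z (fun B => sf_int mu (s k) B - tens_of r B)).
        apply/funext => k; apply: (tnorm_TZ Pnorm_le Pid Prange).
        exact: hZTF.
      exact: hc.
Unshelve. all: by end_near.
Qed.
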